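(* Fix $n\ge1$ and $r,c\in[n]$. The map $(\pi,T)\mapsto G(\pi,T)$ is a bijection from the set of pairs $(\pi,T)\in S_n\times\mathcal{T}_r(n)$ with $\pi(r)=c$ onto the set $\mathcal{G}_r$ of $r$-bi-trees.
   Context: $S_n$ is the set of permutations of $[n]$. An arborescence rooted at $r$ on $[n]$ is a set $T$ of directed edges $u\to v$ on $[n]$ such that from every vertex there is exactly one directed path to $r$; $\mathcal{T}_r(n)$ is the set of these. Consider bipartite graphs on the $2n$ vertices $\{1_L,\dots,n_L\}\cup\{1_R,\dots,n_R\}$ (edges join a left vertex to a right vertex). For $\pi\in S_n$ and $T\in\mathcal{T}_r(n)$, $G(\pi,T)$ is the undirected bipartite graph with edge set $\{(u_L,\pi(u)_R):u\in[n]\setminus\{r\}\}\cup\{(u_L,\pi(v)_R): u\to v\in T\}$. An $r$-bi-tree is an undirected bipartite graph $G$ on these $2n$ vertices such that (i) $r_L$ is an isolated vertex, (ii) all vertices other than $r_L$ lie in a single connected component, and (iii) every left vertex $u_L$ with $u\neq r$ has degree exactly $2$. $\mathcal{G}_r$ is the set of $r$-bi-trees. *)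

(* Defs.v *)
From mathcomp Require Import all_boot all_fingroup.
Set Implicit Arguments. Unset Strict Implicit. Unset Printing Implicit Defensive.

(* A set of directed edges u -> v on [n] is a
   {set 'I_n * 'I_n} (pair (u, v) = edge u -> v).  A bipartite graph on
   {1_L..n_L} u {1_R..n_R} is a {set 'I_n * 'I_n}, the pair (u, v) meaning the
   undirected edge u_L -- v_R. *)

Definition is_arborescence n (r : 'I_n) (T : {set 'I_n * 'I_n}) : Prop :=
  forall u : 'I_n,
    exists! p : seq 'I_n,
      path (fun x y => (x, y) \in T) u p && (last u p == r).

Definition Gmap n (r : 'I_n) (pi : {perm 'I_n}) (T : {set 'I_n * 'I_n})
  : {set 'I_n * 'I_n} :=
  [set (u, pi u) | u in [set~ r]] :|: [set (e.1, pi e.2) | e in T].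

(* adjacency on the 2n vertices: inl u = u_L, inr v = v_R *)
Definition bip_adj n (G : {set 'I_n * 'I_n}) : rel ('I_n + 'I_n) :=
  fun x y =>
    match x, y with
    | inl u, inr v => (u, v) \in G
    | inr v, inl u => (u, v) \in G
    | _, _ => false
    end.

Definition is_bitree n (r : 'I_n) (G : {set 'I_n * 'I_n}) : Prop :=
  [/\ (forall v : 'I_n, (r, v) \notin G),
      (forall x y : 'I_n + 'I_n, x != inl r -> y != inl r ->
          connect (bip_adj G) x y)
    & (forall u : 'I_n, u != r -> #|[set v | (u, v) \in G]| = 2)].

(* Main.v *)
Require Import Defs.
From mathcomp Require Import all_boot all_fingroup.
Set Implicit Arguments. Unset Strict Implicit. Unset Printing Implicit Defensive.

Section Arb.
Variables (n : nat) (r : 'I_n) (T : {set 'I_n * 'I_n}).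
Hypothesis A : is_arborescence r T.

Lemma arb_noout v : (r, v) \notin T.
Proof.
apply/negP=> rv.
have [p [/andP[hp hl] _]] := A v.
have [q [_ uq]] := A r.
have e1 : q = [::] by apply: uq; rewrite /= eqxx.
have e2 : q = v :: p by apply: uq; rewrite /= rv hp hl.
by rewrite e1 in e2.
Qed.

Lemma arb_func u v1 v2 : (u, v1) \in T -> (u, v2) \in T -> v1 = v2.
Proof.
move=> h1 h2.
have [p1 [/andP[hp1 hl1] _]] := A v1.
have [p2 [/andP[hp2 hl2] _]] := A v2.
have [q [_ uq]] := A u.
have e1 : q = v1 :: p1 by apply: uq; rewrite /= h1 hp1 hl1.
have e2 : q = v2 :: p2 by apply: uq; rewrite /= h2 hp2 hl2.
by rewrite e1 in e2; case: e2.
Qed.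

Lemma arb_noloop u : (u, u) \notin T.
Proof.
apply/negP=> uu.
have [q [/andP[hq hl] uq]] := A u.
have e : q = u :: q by apply: uq; rewrite /= uu hq hl.
by have := congr1 size e => /= /eqP; rewrite eqn_leq ltnn andbF.
Qed.

Lemma arb_ex u : u != r -> exists v, (u, v) \in T.
Proof.
move=> ur.
have [[|v q] [/andP[hq hl] _]] := A u.
  by rewrite /= (negbTE ur) in hl.
by case/andP: hq => h _; exists v.
Qed.

Lemma arb_ind (Q : 'I_n -> Prop) : Q r ->
  (forall u v, (u, v) \in T -> Q v -> Q u) -> forall u, Q u.
Proof.
move=> Qr IH u.
have [p [/andP[hp /eqP hl] _]] := A u.
elim: p u hp hl => [|v p IHp] u /=; first by move=> _ ->.
case/andP=> uv hp hl; apply: (IH u v uv); exact: IHp.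
Qed.

End Arb.

Lemma GmapP n (r : 'I_n) (pi : {perm 'I_n}) (T : {set 'I_n * 'I_n}) x y :
  reflect ((x != r /\ y = pi x) \/ (exists2 v, (x, v) \in T & y = pi v))
          ((x, y) \in Gmap r pi T).
Proof.
apply: (iffP idP).
  rewrite in_setU => /orP[/imsetP[u hu [-> ->]] | /imsetP[[a b] hab [-> ->]]].
    by left; rewrite -in_setC1.
  by right; exists b.
case=> [[xr ->] | [v xv ->]]; rewrite in_setU; apply/orP.
  by left; apply/imsetP; exists x; rewrite ?in_setC1.
by right; apply/imsetP; exists (x, v).
Qed.
Lemma bip_sym n (G : {set 'I_n * 'I_n}) : symmetric (bip_adj G).
Proof. by move=> [a|a] [b|b]. Qed.

Lemma part1 n (r c : 'I_n) (pi : {perm 'I_n}) (T : {set 'I_n * 'I_n}) :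
  pi r = c -> is_arborescence r T -> is_bitree r (Gmap r pi T).
Proof.
move=> Hc A.
have uneq u v : (u, v) \in T -> u != r.
  by move=> uv; apply/eqP=> e; subst u; rewrite (negbTE (arb_noout A v)) in uv.
split.
- move=> v; apply/GmapP => -[[]|[v' hv _]]; first by rewrite eqxx.
  by rewrite (negbTE (arb_noout A v')) in hv.
- set G := Gmap r pi T.
  have key : forall u, connect (bip_adj G) (inr (pi u)) (inr c).
    apply: (arb_ind A); first by rewrite Hc connect0.
    move=> u v uv IH; apply: connect_trans IH.
    apply: (connect_trans (y := inl u)); apply: connect1 => /=; apply/GmapP.
      by left; split; first exact: uneq uv.
    by right; exists v.
  have key2 : forall x, x != inl r -> connect (bip_adj G) x (inr c).
    case=> [u | w] hx.
      apply: (connect_trans (y := inr (pi u))); last exact: key.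
      apply: connect1 => /=; apply/GmapP; left; split => //.
    by have := key (pi^-1 w)%g; rewrite permKV.
  move=> x y hx hy; apply: connect_trans (key2 x hx) _.
  by rewrite (sym_connect_sym (@bip_sym n G)); apply: key2.
- move=> u ur; have [v uv] := arb_ex A ur.
  have -> : [set v' | (u, v') \in Gmap r pi T] = [set pi u; pi v].
    apply/setP=> w; rewrite in_set in_set2; apply/GmapP/orP.
      case=> [[_ ->] | [v' uv' ->]]; first by left.
      by right; rewrite (arb_func A uv' uv).
    by case=> /eqP ->; [left | right; exists v].
  rewrite cards2 (inj_eq perm_inj).
  suff -> : u != v by [].
  by apply/eqP=> e; subst v; rewrite (negbTE (arb_noloop A u)) in uv.
Qed.

Lemma sub_T n (r : 'I_n) (pi : {perm 'I_n}) (Ta Tb : {set 'I_n * 'I_n}) :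
  is_arborescence r Ta -> Gmap r pi Ta = Gmap r pi Tb ->
  forall u v, (u, v) \in Ta -> (u, v) \in Tb.
Proof.
move=> Aa E u v uv.
have : (u, pi v) \in Gmap r pi Tb by rewrite -E; apply/GmapP; right; exists v.
case/GmapP => [[_ /perm_inj e] | [v' uv' /perm_inj ->]] //.
by subst v; rewrite (negbTE (arb_noloop Aa u)) in uv.
Qed.

Lemma part2 n (r c : 'I_n) (pi1 pi2 : {perm 'I_n}) (T1 T2 : {set 'I_n * 'I_n}) :
  pi1 r = c -> is_arborescence r T1 ->
  pi2 r = c -> is_arborescence r T2 ->
  Gmap r pi1 T1 = Gmap r pi2 T2 -> pi1 = pi2 /\ T1 = T2.
Proof.
move=> H1 A1 H2 A2 E.
have Hpi : pi1 = pi2.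
  apply/permP; apply: (arb_ind A1) => [|u v uv IH]; first by rewrite H1 H2.
  have ur : u != r.
    by apply/eqP=> e; subst u; rewrite (negbTE (arb_noout A1 v)) in uv.
  have : (u, pi2 u) \in Gmap r pi1 T1 by rewrite E; apply/GmapP; left.
  case/GmapP => [[_ ->] // | [v' uv' e]].
  rewrite (arb_func A1 uv' uv) IH in e.
  have e' := perm_inj e; subst v.
  by rewrite (negbTE (arb_noloop A1 u)) in uv.
subst pi2; split => //.
apply/setP=> -[u v]; apply/idP/idP; first exact: (sub_T A1 E).
exact: (sub_T A2 (esym E)).
Qed.

Lemma arb_of_func n (r : 'I_n) (T : {set 'I_n * 'I_n}) :
  (forall v, (r, v) \notin T) ->
  (forall u v1 v2, (u, v1) \in T -> (u, v2) \in T -> v1 = v2) ->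
  (forall u, exists p, path (fun x y => (x, y) \in T) u p && (last u p == r)) ->
  is_arborescence r T.
Proof.
move=> Hr Hf Hex u; have [p hp] := Hex u; exists p; split => // q.
elim: p u q hp => [|v p IH] u [|v' q] /=.
- by [].
- by move=> /eqP -> /andP[/andP[h _] _]; rewrite (negbTE (Hr v')) in h.
- by move=> /andP[/andP[h _] _] /eqP e; subst u; rewrite (negbTE (Hr v)) in h.
case/andP=> /andP[h1 h2] h3 /andP[/andP[h1' h2'] h3'].
have e := Hf _ _ _ h1 h1'; subst v'.
by congr (_ :: _); apply: (IH v); apply/andP; split.
Qed.

Section Surj.
Variables (n : nat) (r c : 'I_n) (G : {set 'I_n * 'I_n}).
Hypothesis B : is_bitree r G.

Fixpoint reach (k : nat) (x : 'I_n + 'I_n) : bool :=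
  if k is k'.+1 then [exists y, bip_adj G x y && reach k' y] else x == inr c.

Definition Pd x k := (x == inl r) || reach k x.

Lemma Pex x : exists k, Pd x k.
Proof.
case: (eqVneq x (inl r)) => [->|hx]; first by exists 0; rewrite /Pd eqxx.
case: B => H1 Hc _.
have := Hc x (inr c) hx isT.
case/connectP => p; elim: p x {hx} => [|y p IH] x /=.
  by move=> _ <-; exists 0; rewrite /Pd /= eqxx ?orbT.
case/andP => xy hp hl; have [k hk] := IH y hp hl.
exists k.+1; rewrite /Pd /=; apply/orP; right; apply/existsP; exists y.
rewrite xy /=; case/orP: hk => // /eqP e; subst y.
by case: x xy {IH hl} => //= v; rewrite (negbTE (H1 v)).
Qed.

Definition d x := ex_minn (Pex x).

Lemma d_le y k : reach k y -> d y <= k.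
Proof. by move=> hy; rewrite /d; case: ex_minnP => m _ /(_ k); rewrite /Pd hy orbT; apply. Qed.

Lemma d_reach x : x != inl r -> reach (d x) x.
Proof. by move=> hx; rewrite /d; case: ex_minnP => m; rewrite /Pd (negbTE hx). Qed.

Lemma d_closer x : x != inl r -> x != inr c -> exists2 y, bip_adj G x y & d y < d x.
Proof.
move=> hx hxc; have := d_reach hx.
case E: (d x) => [|k] /=; first by rewrite (negbTE hxc).
case/existsP=> y /andP[xy hy]; exists y => //.
by rewrite ltnS; apply: d_le.
Qed.

Lemma d0 : d (inr c) = 0.
Proof. by apply/eqP; rewrite -leqn0; apply: d_le; rewrite /= eqxx. Qed.

Lemma noroot u v : (u, v) \in G -> u != r.
Proof. by case: B => H _ _ uv; apply/eqP=> e; subst u; rewrite (negbTE (H v)) in uv. Qed.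

Lemma three_nb u a b e : (u, a) \in G -> (u, b) \in G -> (u, e) \in G ->
  [\/ a = b, a = e | b = e].
Proof.
move=> ha hb he; have ur := noroot ha.
case: B => _ _ /(_ u ur) /eqP /cards2P [x [y [xy E]]].
have : a \in [set v | (u, v) \in G] by rewrite inE.
have : b \in [set v | (u, v) \in G] by rewrite inE.
have : e \in [set v | (u, v) \in G] by rewrite inE.
rewrite E !in_set2.
by case/orP=> /eqP->; case/orP=> /eqP->; case/orP=> /eqP->;
  first [by constructor 1 | by constructor 2 | by constructor 3].
Qed.

Lemma closer_left u : u != r -> exists2 w, (u, w) \in G & d (inr w) < d (inl u).
Proof.
move=> ur.
have hu : inl u != inl r :> 'I_n + 'I_n by apply/eqP=> -[e]; rewrite e eqxx in ur.
have [[u'|w] //] := @d_closer (inl u) hu isT.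
by move=> uw h; exists w.
Qed.

Definition sig w := odflt r [pick u | ((u, w) \in G) && (d (inl u) < d (inr w))].

Lemma sigP w : w != c -> (sig w, w) \in G /\ d (inl (sig w)) < d (inr w).
Proof.
move=> wc.
have hw : inr w != inr c :> 'I_n + 'I_n by apply/eqP=> -[e]; rewrite e eqxx in wc.
have [[u|w'] //] := @d_closer (inr w) isT hw.
move=> /= uw hu; rewrite /sig; case: pickP => [u' /andP[] //|/(_ u)].
by rewrite uw hu.
Qed.

Lemma sig_inj : {in [set~ c] &, injective sig}.
Proof.
move=> w1 w2; rewrite !in_setC1 => h1 h2 e.
have [g1 d1] := sigP h1; have [g2 d2] := sigP h2.
rewrite e in g1 d1.
have [w3 g3 d3] := closer_left (noroot g2).
case: (three_nb g1 g2 g3) => // E; subst w3.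
  by have := ltn_trans d3 d1; rewrite ltnn.
by have := ltn_trans d3 d2; rewrite ltnn.
Qed.

Lemma sig_surj u : u != r -> exists2 w, w != c & sig w = u.
Proof.
move=> ur.
have E : sig @: [set~ c] = [set~ r].
  apply/eqP; rewrite eqEcard; apply/andP; split.
    apply/subsetP=> _ /imsetP[w hw ->]; rewrite in_setC1 in hw.
    by rewrite in_setC1; apply: (noroot (sigP hw).1).
  by rewrite (card_in_imset sig_inj) !cardsC1.
have : u \in sig @: [set~ c] by rewrite E in_setC1.
by case/imsetP=> w hw ->; exists w; rewrite -?in_setC1.
Qed.

Definition pif u :=
  if u == r then c else odflt c [pick w | ((u, w) \in G) && (d (inl u) < d (inr w))].

Lemma pifP u : u != r -> (u, pif u) \in G /\ d (inl u) < d (inr (pif u)).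
Proof.
move=> ur; rewrite /pif (negbTE ur).
have [w wc E] := sig_surj ur; have [g dd] := sigP wc; rewrite E in g dd.
case: pickP => [w' /andP[] //|/(_ w)].
by rewrite g dd.
Qed.

Lemma pif_sig w : w != c -> pif (sig w) = w.
Proof.
move=> wc; have [g dd] := sigP wc.
have ur := noroot g.
have [g1 d1] := pifP ur.
have [w3 g3 d3] := closer_left ur.
case: (three_nb g1 g g3) => // E.
  by rewrite -E in d3; have := ltn_trans d3 d1; rewrite ltnn.
by rewrite -E in d3; have := ltn_trans d3 dd; rewrite ltnn.
Qed.

Lemma pif_nc u : u != r -> pif u != c.
Proof.
move=> ur; have [_ h] := pifP ur; apply/eqP=> e; rewrite e d0 in h.
by [].
Qed.

Lemma pif_inj : injective pif.
Proof.
move=> u1 u2.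
case: (eqVneq u1 r) => [->|h1]; case: (eqVneq u2 r) => [->|h2] //.
- by rewrite {1}/pif eqxx => e; have := pif_nc h2; rewrite -e eqxx.
- by rewrite {2}/pif eqxx => e; have := pif_nc h1; rewrite e eqxx.
have [w1 c1 <-] := sig_surj h1; have [w2 c2 <-] := sig_surj h2.
by rewrite !pif_sig // => ->.
Qed.

Definition pim := perm pif_inj.

Lemma pimE u : pim u = pif u.
Proof. by rewrite permE. Qed.

Definition Tm := [set e : 'I_n * 'I_n | (e.1 != r) && (e.2 != e.1) && ((e.1, pim e.2) \in G)].

Lemma Tm_gmap : Gmap r pim Tm = G.
Proof.
apply/setP=> -[x y]; apply/GmapP/idP.
  case=> [[xr ->] | [v]].
    by rewrite pimE; case: (pifP xr).
  by rewrite inE /= => /andP[_ h] ->.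
move=> xy; have xr := noroot xy.
case: (eqVneq y (pim x)) => [->|ne]; first by left.
right; exists ((pim^-1)%g y); last by rewrite permKV.
rewrite inE /= xr permKV xy andbT /=.
by apply/eqP=> e; move: ne; rewrite -e permKV eqxx.
Qed.

Lemma Tm_arb : is_arborescence r Tm.
Proof.
apply: arb_of_func.
- by move=> v; rewrite inE /= eqxx.
- move=> u v1 v2; rewrite !inE /= => /andP[/andP[ur n1] g1] /andP[/andP[_ n2] g2].
  have [g0 _] := pifP ur; rewrite -pimE in g0.
  case: (three_nb g0 g1 g2) => /perm_inj e //.
    by rewrite e eqxx in n1.
  by rewrite e eqxx in n2.
suff H : forall k u, d (inr (pim u)) < k ->
    exists p, path (fun x y => (x, y) \in Tm) u p && (last u p == r).
  by move=> u; apply: (H (d (inr (pim u))).+1).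
elim=> [//|k IH] u hk.
case: (eqVneq u r) => [->|ur]; first by exists [::]; rewrite /= eqxx.
have [w g dw] := closer_left ur.
have [g0 d0'] := pifP ur; rewrite -pimE in g0 d0'.
have uv : (u, (pim^-1)%g w) \in Tm.
  rewrite inE /= ur permKV g andbT /=.
  apply/eqP=> e; have := ltn_trans dw d0'; rewrite -e permKV ltnn.
  by [].
have [|p hp] := IH ((pim^-1)%g w).
  rewrite permKV -ltnS; apply: leq_trans hk.
  by rewrite ltnS; apply: ltn_trans dw d0'.
by exists ((pim^-1)%g w :: p); rewrite /= uv.
Qed.

End Surj.

Theorem lemma3p8 (n : nat) (hn : (1 <= n)%N) (r c : 'I_n) :
  [/\ (forall (pi : {perm 'I_n}) (T : {set 'I_n * 'I_n}),
         pi r = c -> is_arborescence r T -> is_bitree r (Gmap r pi T)),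
      (forall (pi1 pi2 : {perm 'I_n}) (T1 T2 : {set 'I_n * 'I_n}),
         pi1 r = c -> is_arborescence r T1 ->
         pi2 r = c -> is_arborescence r T2 ->
         Gmap r pi1 T1 = Gmap r pi2 T2 -> pi1 = pi2 /\ T1 = T2)
    & (forall G : {set 'I_n * 'I_n}, is_bitree r G ->
         exists (pi : {perm 'I_n}) (T : {set 'I_n * 'I_n}),
           [/\ pi r = c, is_arborescence r T & Gmap r pi T = G])].
Proof.
split.
- exact: part1.
- exact: part2.
move=> G B; exists (pim c B), (Tm c B); split.
- by rewrite pimE /pif eqxx.
- exact: Tm_arb.
exact: Tm_gmap.
Qed.
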